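(* Let $A=\{a_0,a_1,\dots,a_{k-1}\}\subseteq\mathcal{C}_n$ with $a_0<\dots<a_{k-1}$ and let $m\in\{0,\dots,k-1\}$. Then the set $\mathcal{DN}^{\,1}_m=\{\overline{a_m}\}\cup\mathcal{L}^{n-1}_{a_m}\left(\sigma^{(n)}_k(A)\right)$ is a subsemiring of the simplex $\sigma^{(n)}_k(A)$.
   Context: $\mathcal{C}_n=\{0,1,\dots,n-1\}$ with its usual order; $\widehat{\mathcal{E}}_{\mathcal{C}_n}$ is the set of all order-preserving maps $\mathcal{C}_n\to\mathcal{C}_n$ (not required to fix $0$), a semiring with $(\alpha+\beta)(x)=\max(\alpha(x),\beta(x))$ and $(\alpha\cdot\beta)(x)=\beta(\alpha(x))$. The simplex $\sigma^{(n)}_k(A)$ is the set of all $\alpha\in\widehat{\mathcal{E}}_{\mathcal{C}_n}$ with $\mathrm{im}(\alpha)\subseteq A$ (a subsemiring). $\overline{x}$ is the constant map with value $x$. For $s\in\{0,\dots,n-1\}$, the layer $\mathcal{L}^{s}_{a_m}\left(\sigma^{(n)}_k(A)\right)$ is the set of $\alpha\in\sigma^{(n)}_k(A)$ with exactly $s$ elements $i\in\mathcal{C}_n$ satisfying $\alpha(i)=a_m$. A subsemiring is a nonempty subset closed under $+$ and $\cdot$. *)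

(* Defs.v *)
From mathcomp Require Import all_boot.
Set Implicit Arguments. Unset Strict Implicit. Unset Printing Implicit Defensive.

(* Maps C_n -> C_n, with C_n = 'I_n = {0,...,n-1} ordered as naturals. *)
Notation map_n n := {ffun 'I_n -> 'I_n}.

Definition order_preserving n (f : map_n n) : bool :=
  [forall i : 'I_n, forall j : 'I_n, (i <= j) ==> (f i <= f j)].

Definition Ehat n : {set map_n n} := [set f | order_preserving f].

Definition addE n (f g : map_n n) : map_n n :=
  [ffun x => if f x <= g x then g x else f x].

Definition mulE n (f g : map_n n) : map_n n := [ffun x => g (f x)].

(* sigma^{(n)}_k(A): order-preserving maps with image in A (k = #|A|) *)
Definition simplex n (A : {set 'I_n}) : {set map_n n} :=
  [set f in Ehat n | [forall x, f x \in A]].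

(* a_m : the m-th smallest element of A (0-indexed), as a natural number *)
Definition elem_at n (A : {set 'I_n}) (m : nat) : nat :=
  nth 0 (sort leq [seq val x | x <- enum A]) m.

Definition const_set n (a : nat) : {set map_n n} :=
  [set f in Ehat n | [forall i, val (f i) == a]].

Definition layer n (s a : nat) (S : {set map_n n}) : {set map_n n} :=
  [set f in S | #|[set i | val (f i) == a]| == s].

Definition DN1 n (A : {set 'I_n}) (m : nat) : {set map_n n} :=
  const_set n (elem_at A m) :|: layer n.-1 (elem_at A m) (simplex A).

Definition is_subsemiring n (S T : {set map_n n}) : Prop :=
  [/\ S \subset T, S != set0,
      (forall f g, f \in S -> g \in S -> addE f g \in S) &
      (forall f g, f \in S -> g \in S -> mulE f g \in S)].

(* Main.v *)
Require Import Defs.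
From mathcomp Require Import all_boot.
From mathcomp Require Import zify.
Set Implicit Arguments. Unset Strict Implicit.

Definition Nset n (a : nat) (f : map_n n) : {set 'I_n} :=
  ~: [set i | nat_of_ord (f i) == a].

Lemma opP n (f : map_n n) : reflect (forall i j : 'I_n, i <= j -> f i <= f j)
  (order_preserving f).
Proof.
apply: (iffP forallP) => H.
  by move=> i j ij; move/forallP: (H i) => /(_ j) /implyP; apply.
by move=> i; apply/forallP => j; apply/implyP; apply: H.
Qed.

Lemma simplexP n (A : {set 'I_n}) (f : map_n n) :
  f \in simplex A <-> (forall i j : 'I_n, i <= j -> f i <= f j) /\ (forall x, f x \in A).
Proof.
rewrite /simplex inE /Ehat inE; split.
  by case/andP => /opP H /forallP H2.
by case=> H1 H2; apply/andP; split; [apply/opP | apply/forallP].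
Qed.

Lemma DN1_iff n (A : {set 'I_n}) m (a' : 'I_n) (f : map_n n) :
  a' \in A -> val a' = elem_at A m ->
  f \in DN1 A m <-> f \in simplex A /\ #|Nset (elem_at A m) f| <= 1.
Proof.
move=> Aa Ea; have n0 : 0 < n by case: (a') => /= ? ?; lia.
have CC := cardsC [set i | val (f i) == elem_at A m]; rewrite card_ord in CC.
rewrite /DN1 inE; split.
  case/orP.
    rewrite /const_set inE => /andP [Hf /forallP Hc].
    have fe : forall i, f i = a' by move=> i; apply: val_inj; rewrite Ea; apply/eqP.
    split.
      apply/simplexP; split; last by move=> x; rewrite fe.
      by move=> i j _; rewrite !fe.
    have -> : Nset (elem_at A m) f = set0.
      by apply/setP => i; rewrite !inE fe Ea eqxx.
    by rewrite cards0.
  rewrite /layer inE => /andP [Hs /eqP Hc]; split => //.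
  rewrite /Nset; move: CC Hc n0; set u := #|_|; set v := #|_|; clear; move=> CC Hc n0; have := prednK n0; lia.
move=> [Hs Hc].
have [H0|H1] : #|Nset (elem_at A m) f| = 0 \/ #|Nset (elem_at A m) f| = 1 by lia.
  apply/orP; left; rewrite /const_set inE.
  move/simplexP: (Hs) => [Hop _]; rewrite /Ehat inE; apply/andP; split; first exact/opP.
  apply/forallP => i; move/eqP: H0; rewrite cards_eq0 => /eqP /setP /(_ i).
  by rewrite !inE; case: (val (f i) == _).
apply/orP; right; rewrite /layer inE Hs /=; apply/eqP.
rewrite /Nset in H1; move: CC H1 n0; set u := #|_|; set v := #|_|; clear; move=> CC H1 n0; have := prednK n0; lia.
Qed.

Lemma le1_pair n (a : nat) (f : map_n n) (i j : 'I_n) :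
  #|Nset a f| <= 1 -> i != j -> nat_of_ord (f i) = a \/ nat_of_ord (f j) = a.
Proof.
move=> /card_le1_eqP H ij.
case: (eqVneq (nat_of_ord (f i)) a) => [->|Ei]; first by left.
case: (eqVneq (nat_of_ord (f j)) a) => [->|Ej]; first by right.
have := H j i; rewrite !inE Ei Ej => /(_ isT isT) E.
by rewrite E eqxx in ij.
Qed.

Lemma fixed n (A : {set 'I_n}) (a' : 'I_n) (f : map_n n) :
  f \in simplex A -> #|Nset (val a') f| <= 1 -> f a' = a'.
Proof.
move=> /simplexP [Hop _] H1; apply: val_inj => /=.
have n0 : 0 < n by case: (a') => /= ? ?; lia.
change (nat_of_ord (f a') = nat_of_ord a'); case: (ltngtP (nat_of_ord (f a')) (nat_of_ord a')) => // Hlt.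
- have z0 : 0 < n := n0.
  pose z := Ordinal z0.
  have Hz : f z <= f a' by apply: Hop.
  case: (eqVneq z a') => [E|ne].
    by rewrite -E /= in Hlt.
  have := le1_pair H1 ne => /=; lia.
- have z0 : n.-1 < n by lia.
  pose z := Ordinal z0.
  have Hz : f a' <= f z by apply: Hop => /=; have := ltn_ord a'; lia.
  case: (eqVneq z a') => [E|ne].
    by move: Hlt; rewrite -E /=; have := ltn_ord (f z); lia.
  have := le1_pair H1 ne => /=; have := ltn_ord (f z); lia.
Qed.

Lemma elem_in n (A : {set 'I_n}) m : m < #|A| ->
  exists2 a' : 'I_n, a' \in A & val a' = elem_at A m.
Proof.
move=> mA.
have : elem_at A m \in [seq val x | x <- enum A].
  rewrite /elem_at -(mem_sort leq); apply: mem_nth.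
  by rewrite size_sort size_map -cardE.
by case/mapP => x; rewrite mem_enum => xA ->; exists x.
Qed.

Theorem proposition2 (n : nat) (A : {set 'I_n}) (m : nat) :
  m < #|A| -> is_subsemiring (DN1 A m) (simplex A).
Proof.
move=> mA; have [a' Aa Ea] := elem_in mA.
have D := DN1_iff _ Aa Ea.
rewrite -Ea in D.
split.
- by apply/subsetP => f /D [].
- apply/set0Pn; exists [ffun=> a']; apply/D; split.
    by apply/simplexP; split => [i j _|x]; rewrite !ffunE.
  apply/card_le1_eqP => i j; rewrite !inE ffunE eqxx //.
- move=> f g /D [Sf Cf] /D [Sg Cg]; apply/D.
  have hE : forall x, nat_of_ord (addE f g x) = maxn (f x) (g x).
    move=> x; rewrite /addE ffunE; case: leqP => H; lia.
  move/simplexP: (Sf) => [Of If]; move/simplexP: (Sg) => [Og Ig].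
  split.
    apply/simplexP; split.
      move=> i j ij; rewrite !hE; move: (Of _ _ ij) (Og _ _ ij) => h1 h2; by rewrite geq_max !leq_max h1 h2 orbT.
    by move=> x; rewrite /addE ffunE; case: ifP.
  apply/card_le1_eqP => i j; rewrite !inE !hE => Hi Hj.
  have key : forall i0 j0 : 'I_n, i0 < j0 ->
      maxn (f i0) (g i0) != val a' -> maxn (f j0) (g j0) != val a' -> False.
    move=> {Hi Hj} i0 j0 ij Hi Hj.
    have ne : i0 != j0 by rewrite neq_ltn ij.
    move: (Of _ _ (ltnW ij)) (Og _ _ (ltnW ij)) (le1_pair Cf ne) (le1_pair Cg ne).
    move: Hi Hj; rewrite /=.
    move: (nat_of_ord (f i0)) (nat_of_ord (f j0)) (nat_of_ord (g i0)) (nat_of_ord (g j0)) (nat_of_ord a') => x y z w v.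
    lia.
  case: (ltngtP i j) => c.
  - by case: (key _ _ c Hi Hj).
  - by case: (key _ _ c Hj Hi).
  - by apply: val_inj.
- move=> f g /D [Sf Cf] /D [Sg Cg]; apply/D.
  move/simplexP: (Sf) => [Of If]; move/simplexP: (Sg) => [Og Ig].
  have ga := fixed Sg Cg.
  split.
    apply/simplexP; split.
      by move=> i j ij; rewrite /mulE !ffunE; apply/Og/Of.
    by move=> x; rewrite /mulE ffunE.
  apply: leq_trans Cf; apply: subset_leq_card; apply/subsetP => x.
  rewrite !inE /mulE ffunE; apply: contra => /eqP E.
  have -> : f x = a' by apply: val_inj.
  by rewrite ga.
Qed.
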